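(* Let $q$ be a prime power, $s,\ell$ positive integers, $\alpha,\beta\in\{1,-1\}\subseteq\mathbb{F}_q$, let $r$ be the multiplicative order of $\beta$ (so $r=1$ if $\beta=1$, $r=2$ if $\beta=-1\neq 1$), and assume $q\equiv 1\pmod{r\ell}$. Let $\omega\in\mathbb{F}_q$ be a primitive $r\ell$-th root of unity with $\omega^\ell=\beta$, and $\eta_k(y)=\prod_{j\ne k,\,0\le j\le \ell-1}\frac{y-\omega^{1+jr}}{\omega^{1+kr}-\omega^{1+jr}}$ for $0\le k\le\ell-1$. Let $\mathcal{C}$ be an ideal of $\mathcal{R}=\mathbb{F}_q[x,y]/\langle x^s-\alpha,y^\ell-\beta\rangle$; for $j=0,\dots,\ell-1$ let $p_j(x)$ be the monic divisor of $x^s-\alpha$ generating $I_j=\{f(x)\in\mathbb{F}_q[x]/\langle x^s-\alpha\rangle:\eta_j(y)f(x)\in\mathcal{C}\}$, $a_j=\deg p_j(x)$, and $p_j'(x)\in\mathbb{F}_q[x]$ with $p_j(x)p_j'(x)=x^s-\alpha$. Then the dual code satisfies $$\mathcal{C}^\perp=\big\langle p_0'^*(x)\eta_0^*(y),\ p_1'^*(x)\eta_1^*(y),\ \dots,\ p_{\ell-1}'^*(x)\eta_{\ell-1}^*(y)\big\rangle,$$ and the elements $x^i p_j'^*(x)\eta_j^*(y)$, $0\le j\le \ell-1$, $0\le i\le a_j-1$, form a basis of $\mathcal{C}^\perp$ over $\mathbb{F}_q$ (i.e. the matrix with these rows is a generator matrix of $\mathcal{C}^\perp$).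
   Context: An element $\sum_{i,j}c_{i,j}x^iy^j$ of $\mathcal{R}$ ($0\le i\le s-1$, $0\le j\le\ell-1$) is identified with the vector $(c_{i,j})$ of length $s\ell$; ideals of $\mathcal{R}$ are two-dimensional $(\alpha,\beta)$-constacyclic codes. $\mathcal{C}^\perp$ is the dual with respect to the Euclidean inner product $\sum_{i,j}c_{i,j}d_{i,j}$; for $\alpha,\beta\in\{\pm1\}$ it is again an ideal of $\mathcal{R}$. For a nonzero polynomial $f$ of degree $k$, its reciprocal is $f^*(x)=x^kf(1/x)$ (so $\eta_j^*(y)=y^{\ell-1}\eta_j(1/y)$). *)

(* Defs.v *)
From HB Require Import structures.
From mathcomp Require Import all_boot all_order all_algebra.
Set Implicit Arguments. Unset Strict Implicit. Unset Printing Implicit Defensive.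
Import Order.TTheory GRing.Theory.
Local Open Scope ring_scope.

(* Elements of R = F[x,y]/<x^s - a, y^l - b> are represented by their
   coefficient matrices c : 'M[F]_(s,l), c i j = coefficient of x^i y^j. *)

Definition md (F : fieldType) (n : nat) (a : F) : {poly F} := 'X^n - a%:P.

(* class in R of f(x) g(y) *)
Definition emb (F : fieldType) (s l : nat) (a b : F) (f g : {poly F})
  : 'M[F]_(s, l) :=
  \matrix_(i < s, j < l) ((f %% md s a)`_i * (g %% md l b)`_j).

Definition px (F : fieldType) (s l : nat) (c : 'M[F]_(s, l)) (j : 'I_l)
  : {poly F} := \sum_(i < s) c i j *: 'X^i.

Definition mulR (F : fieldType) (s l : nat) (a b : F) (c d : 'M[F]_(s, l))
  : 'M[F]_(s, l) :=
  \sum_(j1 < l) \sum_(j2 < l) emb s l a b (px c j1 * px d j2) 'X^(j1 + j2).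

Definition isIdealR (F : finFieldType) (s l : nat) (a b : F)
  (C : {set 'M[F]_(s, l)}) : Prop :=
  [/\ 0 \in C,
      (forall c d, c \in C -> d \in C -> c + d \in C) &
      (forall r c, c \in C -> mulR a b r c \in C)].

Definition dotR (F : fieldType) (s l : nat) (c d : 'M[F]_(s, l)) : F :=
  \sum_(i < s) \sum_(j < l) c i j * d i j.

Definition dualR (F : finFieldType) (s l : nat) (C : {set 'M[F]_(s, l)})
  : {set 'M[F]_(s, l)} :=
  [set d | [forall c, (c \in C) ==> (dotR c d == 0)]].

Definition recip_n (F : fieldType) (n : nat) (f : {poly F}) : {poly F} :=
  \poly_(i < n.+1) f`_(n - i).

Definition recip (F : fieldType) (f : {poly F}) : {poly F} :=
  recip_n (size f).-1 f.

Definition etaL (F : fieldType) (l r : nat) (w : F) (k : 'I_l) : {poly F} :=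
  \prod_(j < l | j != k)
     (('X - (w ^+ (1 + j * r))%:P) * ((w ^+ (1 + k * r) - w ^+ (1 + j * r))^-1)%:P).

(* Main.v *)
Require Import Defs.
From HB Require Import structures.
From mathcomp Require Import all_boot all_order all_algebra.
From mathcomp Require Import zify ring.
Set Warnings "-notation-overridden,-ambiguous-paths".
Set Implicit Arguments. Unset Strict Implicit. Unset Printing Implicit Defensive.
Import Order.TTheory GRing.Theory.
Local Open Scope ring_scope.


Section Gen.
Variable F : fieldType.
Implicit Types f g u : {poly F}.

Lemma poly_exp n f : (size f <= n)%N -> f = \sum_(i < n) f`_i *: 'X^i.
Proof.
move=> h; rewrite -poly_def; apply/polyP => i; rewrite coef_poly.
case: ltnP => // hi; rewrite nth_default //; exact: leq_trans h hi.
Qed.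

Arguments poly_exp {n f}.

Lemma coef_recip n f i : (recip_n n f)`_i = if (i <= n)%N then f`_(n - i) else 0.
Proof. by rewrite /recip_n coef_poly ltnS. Qed.

Lemma size_recip n f : (size (recip_n n f) <= n.+1)%N.
Proof. exact: size_poly. Qed.

Lemma recipK n f : (size f <= n.+1)%N -> recip_n n (recip_n n f) = f.
Proof.
move=> h; apply/polyP => i; rewrite !coef_recip.
case: leqP => hi; first by rewrite leq_subr subKn.
by rewrite nth_default // (leq_trans h).
Qed.

Lemma recipP n a f g : recip_n n (a *: f + g) = a *: recip_n n f + recip_n n g.
Proof. by apply/polyP => i; rewrite coefD coefZ !coef_recip coefD coefZ; case: ifP; rewrite ?mulr0 ?addr0. Qed.

Lemma recip0 n : recip_n n (0 : {poly F}) = 0.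
Proof. by apply/polyP => i; rewrite coef_recip; case: ifP => _; rewrite ?coef0. Qed.

Lemma recipZ n a f : recip_n n (a *: f) = a *: recip_n n f.
Proof. by rewrite -[a *: f]addr0 recipP recip0 addr0. Qed.

Lemma recipD n f g : recip_n n (f + g) = recip_n n f + recip_n n g.
Proof. by rewrite -[f]scale1r recipP !scale1r. Qed.

Lemma recip_sum n (I : Type) (r : seq I) (P : pred I) (G : I -> {poly F}) :
  recip_n n (\sum_(i <- r | P i) G i) = \sum_(i <- r | P i) recip_n n (G i).
Proof. exact: (big_morph _ (@recipD n) (recip0 n)). Qed.

Lemma recipXn n e : (e <= n)%N -> recip_n n ('X^e : {poly F}) = 'X^(n - e).
Proof.
move=> he; apply/polyP => i; rewrite coef_recip !coefXn.
case: leqP => hi.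
  by have -> : (n - i == e)%N = (i == n - e)%N by apply/eqP/eqP; lia.
by have -> : (i == n - e)%N = false by apply/eqP; lia.
Qed.

Lemma recipM m n f g : (size f <= m.+1)%N -> (size g <= n.+1)%N ->
  recip_n (m + n) (f * g) = recip_n m f * recip_n n g.
Proof.
move=> hf hg; rewrite {1}(poly_exp hf) {1}(poly_exp hg).
rewrite {2}(poly_exp hf) {2}(poly_exp hg).
rewrite mulr_suml recip_sum !recip_sum mulr_suml; apply: eq_bigr => i _.
rewrite mulr_sumr recip_sum mulr_sumr; apply: eq_bigr => k _.
rewrite -scalerAl -scalerAr !recipZ -scalerAl -scalerAr.
case: i k => [i Hi] [k Hk] /=.
rewrite -exprD !recipXn -?exprD; try lia.
by congr (_ *: (_ *: 'X^_)); lia.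
Qed.
End Gen.


Section OneD.
Variables (F : fieldType) (s : nat) (al : F).
Hypothesis s_gt0 : (0 < s)%N.
Local Notation M := (md s al).
Implicit Types f g u v h a b p H Fp q : {poly F}.

Lemma size_md : size M = s.+1.
Proof. exact: size_XnsubC. Qed.

Lemma md_neq0 : M != 0.
Proof. by rewrite -size_poly_gt0 size_md. Qed.

Lemma size_modM v : (size (v %% M)%R <= s)%N.
Proof. by have := ltn_modp v M; rewrite md_neq0 size_md ltnS. Qed.

Definition Ls v := (v %% M)`_s.-1.

Lemma Lmod v : (size v <= s + s.-1)%N -> (v %% M)`_s.-1 = v`_s.-1.
Proof.
move=> hv.
have hq : (size (v %/ M)%R <= s.-1)%N.
  by rewrite size_divp ?md_neq0 // size_md /= leq_subLR.
have h : ((v %/ M) * M)`_s.-1 = 0.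
  rewrite {2}/md mulrBr coefB coefMXn coefMC.
  have -> : (s.-1 < s)%N by lia.
  by rewrite (nth_default _ hq) mul0r subr0.
by rewrite [in RHS](divp_eq v M) coefD h add0r.
Qed.

Lemma dotL a b : (size a <= s)%N -> (size b <= s)%N ->
  \sum_(i < s) a`_i * b`_i = Ls (a * recip_n s.-1 b).
Proof.
move=> ha hb; rewrite /Ls Lmod; last first.
  apply: leq_trans (size_polyMleq _ _) _.
  have := size_recip s.-1 b; lia.
rewrite coefM (prednK s_gt0); apply: eq_bigr => j _.
rewrite coef_recip.
have -> : (s.-1 - j <= s.-1)%N by lia.
congr (_ * b`_ _); have := ltn_ord j; lia.
Qed.

Lemma R3 h m : (size h <= s)%N -> (m < s)%N -> Ls ('X^(s.-1 - m) * h) = h`_m.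
Proof.
move=> hh hm; rewrite /Ls Lmod; last first.
  apply: leq_trans (size_polyMleq _ _) _; rewrite size_polyXn; lia.
rewrite coefXnM.
have -> : (s.-1 < s.-1 - m)%N = false by lia.
congr (h`_ _); lia.
Qed.

Lemma Ls_mulmod a b : Ls ((a %% M) * b) = Ls (a * b).
Proof. by rewrite /Ls mulrC modp_mul mulrC. Qed.

Lemma sizes p (p' : {poly F}) : p * p' = M -> [/\ p != 0, p' != 0 & (size p + size p' = s.+2)%N].
Proof.
move=> hpp.
have p0 : p != 0 by apply: contraTneq md_neq0 => p0; rewrite -hpp p0 mul0r eqxx.
have p'0 : p' != 0 by apply: contraTneq md_neq0 => q0; rewrite -hpp q0 mulr0 eqxx.
split => //; have := size_mul p0 p'0; rewrite hpp size_md.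
have := size_poly_gt0 p; have := size_poly_gt0 p'; rewrite p0 p'0.
set a := size p; set b := size p'; lia.
Qed.

Lemma dual1 p (p' : {poly F}) u : p * p' = M -> (size u <= s)%N ->
  (forall g, \sum_(i < s) ((g * p) %% M)`_i * u`_i = 0) ->
  exists H, (size H <= (size p).-1)%N /\ u = H * recip p'.
Proof.
move=> hpp hu ho; have [p0 p'0 hs] := sizes hpp.
set uh := recip_n s.-1 u.
have key g : Ls (g * p * uh) = 0.
  by rewrite -Ls_mulmod -dotL // size_modM.
have h0 : (p * uh) %% M = 0.
  apply/polyP => m; rewrite coef0.
  case: (ltnP m s) => hm.
    rewrite -(R3 _ hm); last exact: size_modM.
    by rewrite /Ls modp_mul mulrA; exact: key.
  by rewrite nth_default // (leq_trans (size_modM _)).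
have : p' %| uh by rewrite -(dvdp_mul2l _ _ p0) hpp; apply/modp_eq0P.
case/dvdpP => q huq.
have uK : u = recip_n s.-1 uh by rewrite recipK // prednK.
case: (eqVneq q 0) => [q0 | qn0].
  by exists 0; split; rewrite ?size_poly0 // uK huq q0 mul0r recip0 mul0r.
have szuh : (size uh <= s)%N by have := size_recip s.-1 u; rewrite prednK.
have := size_mul qn0 p'0; rewrite -huq => hsz.
have := size_poly_gt0 q; have := size_poly_gt0 p'; rewrite qn0 p'0 => h1 h2.
have hr := size_recip (size p).-2 q.
move: hsz hr h1 h2 szuh hs; set a := size p; set b := size p'; set c := size q; set e := size uh => hsz hr h1 h2 szuh hs.
exists (recip_n a.-2 q); split; first by lia.
rewrite uK huq.
have -> : s.-1 = (a.-2 + b.-1)%N by lia.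
by rewrite recipM //; lia.
Qed.

Lemma orth1 p (p' : {poly F}) H g : p * p' = M -> (size H <= (size p).-1)%N ->
  \sum_(i < s) ((g * p) %% M)`_i * (H * recip p')`_i = 0.
Proof.
move=> hpp hH; have [p0 p'0 hs] := sizes hpp.
case: (eqVneq H 0) => [-> | Hn0].
  by apply: big1 => i _; rewrite mul0r coef0 mulr0.
have := size_poly_gt0 H; rewrite Hn0 => hH0.
have szr := size_recip (size p').-1 p'.
have szHr := size_polyMleq H (recip p').
move: szr szHr hH0 hH hs; rewrite /recip.
set a := size p; set b := size p'; set c := size H; set e := size (recip_n _ _) => szr szHr hH0 hH hs.
have hb : (0 < b)%N by rewrite /b size_poly_gt0.
rewrite dotL ?size_modM //; last by apply: leq_trans szHr _; lia.
have -> : recip_n s.-1 (H * recip_n b.-1 p') = recip_n a.-2 H * p'.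
  have -> : s.-1 = (a.-2 + b.-1)%N by lia.
  rewrite recipM; [|lia|exact: szr].
  by rewrite recipK //; lia.
rewrite Ls_mulmod.
have -> : g * p * (recip_n a.-2 H * p') = (g * recip_n a.-2 H) * (p * p') by ring.
by rewrite hpp /Ls modp_mull coef0.
Qed.

Hypothesis al2 : al ^+ 2 = 1.

Lemma red1 p (p' : {poly F}) Fp : p * p' = M ->
  exists H, (size H <= (size p).-1)%N /\ (Fp * recip p') %% M = H * recip p'.
Proof.
move=> hpp; have [p0 p'0 hs] := sizes hpp.
have al0 : al != 0 by apply: contraTneq isT => a0; move: al2; rewrite a0 expr0n /= => /eqP; rewrite eq_sym oner_eq0.
have rM : recip_n s M = - al *: M.
  apply/polyP => i; rewrite coef_recip coefZ /md coefB coefXn coefC coefB coefXn coefC.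
  have [->|i0] := eqVneq i 0%N.
    rewrite subn0 eqxx /=.
    have -> : (0 == s)%N = false by lia.
    have -> : (s == 0)%N = false by lia.
    by rewrite subr0 sub0r mulrNN -expr2 al2.
  case: leqP => hi.
    have -> : (s - i == s)%N = false by lia.
    have -> : (s - i == 0)%N = (i == s)%N by apply/eqP/eqP; lia.
    rewrite subr0 sub0r.
    by case: eqP => _; rewrite ?mulr1 ?mulr0 ?oppr0.
  have -> : (i == s)%N = false by lia.
  by rewrite /= subr0 mulr0.
have hrp : recip p * recip p' = - al *: M.
  rewrite -rM -hpp /recip.
  move: hs; set a := size p; set b := size p' => hs.
  have ha : (0 < a)%N by rewrite /a size_poly_gt0.
  have hb : (0 < b)%N by rewrite /b size_poly_gt0.
  have -> : s = (a.-1 + b.-1)%N by lia.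
  rewrite recipM //; lia.
have dv : recip p' %| M.
  have : recip p' %| - al *: M by rewrite -hrp dvdp_mull.
  by rewrite dvdpZr // oppr_eq0.
have c0 : p'`_0 != 0.
  have : (p * p')`_0 = - al.
    rewrite hpp /md coefB coefXn coefC /=.
    have -> : (0 == s)%N = false by lia.
    by rewrite sub0r.
  rewrite coefM big_ord1 => h; apply: contraTneq al0 => h0.
  by move: h; rewrite subnn h0 mulr0 => /eqP; rewrite eq_sym oppr_eq0 => ->.
have szr : size (recip p') = size p'.
  rewrite /recip /recip_n size_poly_eq ?subnn // prednK // size_poly_gt0 //.
have rp0 : recip p' != 0 by rewrite -size_poly_gt0 szr size_poly_gt0.
have : recip p' %| (Fp * recip p') %% M by rewrite -(dvdp_mod _ dv) dvdp_mulIr.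
case/dvdpP => H hH; exists H; split => //.
case: (eqVneq H 0) => [-> | Hn0]; first by rewrite size_poly0.
have := size_modM (Fp * recip p'); rewrite hH size_mul // szr.
move: hs; set a := size p; set b := size p'; set c := size H => hs.
have ha : (0 < c)%N by rewrite /c size_poly_gt0.
lia.
Qed.

End OneD.

Section Extra.
Variables (F : fieldType) (s : nat) (al : F).
Hypothesis s_gt0 : (0 < s)%N.
Hypothesis al2 : al ^+ 2 = 1.
Local Notation M := (md s al).

Lemma recip_neq0 (p p' : {poly F}) : p * p' = M -> recip p' != 0.
Proof.
move=> hpp; have [p0 p'0 hs] := sizes s_gt0 hpp.
have al0 : al != 0 by apply: contraTneq isT => a0; move: al2; rewrite a0 expr0n /= => /eqP; rewrite eq_sym oner_eq0.
have c0 : p'`_0 != 0.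
  have : (p * p')`_0 = - al.
    rewrite hpp /md coefB coefXn coefC /=.
    have -> : (0 == s)%N = false by lia.
    by rewrite sub0r.
  rewrite coefM big_ord1 => h; apply: contraTneq al0 => h0.
  by move: h; rewrite subnn h0 mulr0 => /eqP; rewrite eq_sym oppr_eq0 => ->.
rewrite -size_poly_gt0 /recip /recip_n size_poly_eq ?subnn //.
Qed.

Lemma size_Hrp (p p' H : {poly F}) : p * p' = M -> (size H <= (size p).-1)%N ->
  (size (H * recip p')%R <= s)%N.
Proof.
move=> hpp hH; have [p0 p'0 hs] := sizes s_gt0 hpp.
have := size_recip (size p').-1 p'; have := size_polyMleq H (recip p').
move: hH hs; rewrite /recip; set a := size p; set b := size p'; set c := size H.
set e := size (recip_n _ _); set f := size (H * recip_n b.-1 p')%R => hH hs h1 h2.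
have hb : (0 < b)%N by rewrite /b size_poly_gt0.
have ha : (0 < a)%N by rewrite /a size_poly_gt0.
lia.
Qed.
End Extra.


Lemma shift_gen (F : fieldType) (M h : {poly F}) (z : F) :
  M %| 'X * h - z%:P * h -> forall n, M %| 'X^n * h - (z ^+ n)%:P * h.
Proof.
move=> H; elim => [|n IH]; first by rewrite expr0 mul1r subrr dvdp0.
have -> : 'X^(n.+1) * h - (z ^+ n.+1)%:P * h =
   'X * ('X^n * h - (z ^+ n)%:P * h) + (z ^+ n)%:P * ('X * h - z%:P * h).
  rewrite exprS exprSr polyCM; ring.
by rewrite dvdp_add // dvdp_mull.
Qed.

Section Eta.
Variables (F : fieldType) (l r : nat) (w be : F).
Hypothesis l_gt0 : (0 < l)%N.
Hypothesis wprim : (r * l)%N.-primitive_root w.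
Hypothesis wl : w ^+ l = be.
Hypothesis be2 : be ^+ 2 = 1.

Implicit Types j k : 'I_l.

Definition om (j : 'I_l) := w ^+ (1 + j * r).

Lemma r_gt0 : (0 < r)%N.
Proof. have := prim_order_gt0 wprim; rewrite muln_gt0 => /andP[]. done. Qed.

Lemma om_l j : om j ^+ l = be.
Proof.
rewrite /om -exprM mulnDl mul1n exprD wl.
have -> : (j * r * l = (r * l) * j)%N by lia.
by rewrite exprM (prim_expr_order wprim) expr1n mulr1.
Qed.

Lemma om_inj : injective om.
Proof.
move=> i j; move/eqP; rewrite /om (eq_prim_root_expr wprim) eqn_modDl.
have hr := r_gt0.
rewrite !modn_small; first last.
- by have := ltn_ord i; nia.
- by have := ltn_ord j; nia.
by rewrite eqn_pmul2r // => /eqP /val_inj.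
Qed.

Lemma w_neq0 : w != 0.
Proof.
apply: contraTneq isT => w0; have := prim_expr_order wprim.
rewrite w0 expr0n; have -> : (r * l == 0)%N = false by have := prim_order_gt0 wprim; lia.
by move/eqP; rewrite eq_sym oner_eq0.
Qed.

Lemma om_neq0 j : om j != 0.
Proof. exact: expf_neq0 w_neq0. Qed.

Lemma md_prod : md l be = \prod_(m < l) ('X - (om m)%:P).
Proof.
set rs := [seq om m | m <- enum 'I_l].
have eP : \prod_(z <- rs) ('X - z%:P) = \prod_(m < l) ('X - (om m)%:P).
  by rewrite big_map enumT.
have dv : \prod_(z <- rs) ('X - z%:P) %| md l be.
  apply: uniq_roots_dvdp; last by rewrite uniq_rootsE map_inj_uniq ?enum_uniq //; exact: om_inj.
  apply/allP => z /mapP[m _ ->]; rewrite /root /md !hornerE om_l subrr //.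
apply/eqP; rewrite -eP eq_sym -eqp_monic ?monic_prod_XsubC ?monicXnsubC //.
rewrite -dvdp_size_eqp // size_prod_XsubC size_map size_enum_ord size_XnsubC //.
Qed.

Definition kap (j : 'I_l) := \prod_(m < l | m != j) (om j - om m)^-1.

Lemma kap_neq0 j : kap j != 0.
Proof.
apply/prodf_neq0 => m mj; rewrite invr_eq0 subr_eq0.
by apply: contra mj => /eqP /om_inj ->.
Qed.

Lemma etaE j : etaL r w j = (\prod_(m < l | m != j) ('X - (om m)%:P)) * (kap j)%:P.
Proof. by rewrite /etaL big_split /= /kap rmorph_prod. Qed.

Lemma eta_mul j : etaL r w j * ('X - (om j)%:P) = kap j *: md l be.
Proof.
by rewrite etaE md_prod [in RHS](bigD1 j) //= -mul_polyC; ring.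
Qed.

Lemma size_eta j : (size (etaL r w j) <= l)%N.
Proof.
case: (eqVneq (etaL r w j) 0) => [->|e0]; first by rewrite size_poly0.
have := congr1 (fun q : {poly F} => size q) (eta_mul j).
rewrite size_mul ?polyXsubC_eq0 // size_XsubC size_scale ?kap_neq0 // size_XnsubC //.
set a := size _; lia.
Qed.

Lemma eta_horner j k : (etaL r w j).[om k] = (j == k)%:R.
Proof.
rewrite etaE hornerM hornerC horner_prod.
have [<-|jk] := eqVneq j k.
  rewrite /kap -big_split /=; apply: big1 => m mj.
  rewrite hornerXsubC mulfV // subr_eq0.
  by apply: contra mj => /eqP /om_inj ->.
rewrite (bigD1 k) 1?eq_sym //= hornerXsubC subrr !mul0r.
done.
Qed.

Lemma lagrange_eta t : (t < l)%N -> \sum_(j < l) (om j ^+ t) *: etaL r w j = 'X^t.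
Proof.
move=> tl; apply/eqP; rewrite -subr_eq0; apply/eqP.
set Q := _ - _.
apply/eqP; apply: contraT => Q0.
have : (size [seq om m | m <- enum 'I_l] < size Q)%N.
  apply: max_poly_roots => //; last by rewrite map_inj_uniq ?enum_uniq //; exact: om_inj.
  apply/allP => z /mapP[k _ ->]; rewrite /root /Q hornerD hornerN horner_sum.
  rewrite (bigD1 k) //= hornerZ eta_horner eqxx mulr1 big1 ?addr0 ?hornerXn ?subrr //.
  by move=> j jk; rewrite hornerZ eta_horner (negPf jk) mulr0.
rewrite size_map size_enum_ord.
have : (size Q <= l)%N.
  apply/leq_sizeP => i li; rewrite /Q coefB coef_sum coefXn.
  have -> : (i == t)%N = false by lia.
  rewrite subr0; apply: big1 => j _; rewrite coefZ nth_default ?mulr0 //.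
  exact: leq_trans (size_eta j) li.
set a := size Q; lia.
Qed.

Lemma eta_coefS j m :
  (etaL r w j)`_m - (etaL r w j)`_m.+1 * om j = kap j * (m.+1 == l)%:R.
Proof.
have := congr1 (fun q : {poly F} => q`_m.+1) (eta_mul j); rewrite /= mulrBr coefB coefMX coefMC.
by rewrite coefZ coefB coefXn coefC /= subr0.
Qed.

Lemma eta_coef_rec j m : (m.+1 < l)%N -> (etaL r w j)`_m = om j * (etaL r w j)`_m.+1.
Proof.
move=> ml; have := eta_coefS j m.
have -> : (m.+1 == l)%N = false by lia.
by rewrite mulr0 => /eqP; rewrite subr_eq0 mulrC => /eqP.
Qed.

Lemma eta_top j : (etaL r w j)`_l.-1 = kap j.
Proof.
have := eta_coefS j l.-1; rewrite prednK // eqxx mulr1.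
by rewrite (nth_default _ (size_eta j)) mul0r subr0.
Qed.

Lemma etas_coef j t : (t < l)%N -> (recip_n l.-1 (etaL r w j))`_t = kap j * om j ^+ t.
Proof.
move=> tl; rewrite coef_recip.
have -> : (t <= l.-1)%N by lia.
elim: t tl => [|t IH] tl; first by rewrite subn0 eta_top expr0 mulr1.
rewrite eta_coef_rec; last by lia.
have -> : (l.-1 - t.+1).+1 = (l.-1 - t)%N by lia.
by rewrite IH; [rewrite exprS mulrCA | lia].
Qed.

Lemma size_etas j : (size (recip_n l.-1 (etaL r w j)) <= l)%N.
Proof. by have := size_recip l.-1 (etaL r w j); rewrite prednK. Qed.

Lemma eta_shift j n : md l be %| 'X^n * etaL r w j - ((om j) ^+ n)%:P * etaL r w j.
Proof.
apply: shift_gen.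
rewrite -mulrBl mulrC eta_mul dvdpZr ?kap_neq0 //.
Qed.

Lemma etas_shift j n : md l be %|
  'X^n * recip_n l.-1 (etaL r w j) - (((om j)^-1) ^+ n)%:P * recip_n l.-1 (etaL r w j).
Proof.
apply: shift_gen.
set e := recip_n _ _.
have om0 := om_neq0 j.
have -> : 'X * e - (om j)^-1%:P * e = (kap j * (om j)^-1 * be) *: md l be.
  apply/polyP => i; rewrite coefB mulrC coefMX mul_polyC !coefZ /md coefB coefXn coefC.
  have [->|i0] := eqVneq i 0%N.
    rewrite /= etas_coef // expr0 mulr1.
    have -> : (0 == l)%N = false by lia.
    have -> : (false%:R : F) = 0 by [].
    have -> : kap j / om j * be * (0 - be) = - (kap j / om j * be ^+ 2) by ring.
    by rewrite be2 mulr1 mulrC sub0r.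
  rewrite subr0.
  case: (ltngtP i l) => hil.
  - rewrite !etas_coef //; last by lia.
    have -> : i = i.-1.+1 by lia.
    by rewrite /= exprS mulrCA mulKf // subrr mulr0.
  - rewrite !nth_default; [by rewrite mulr0 subr0 /= mulr0 | |]; apply: (leq_trans (size_etas j)); lia.
  - rewrite hil /= mulr1 (nth_default _ (size_etas j)) mulr0 subr0.
    rewrite etas_coef; last by lia.
    rewrite -(om_l j) -mulrA; congr (_ * _).
    have -> : l = l.-1.+1 by lia.
    by rewrite /= exprS mulKf.
by rewrite dvdpZr ?dvdpp // !mulf_neq0 ?kap_neq0 ?invr_eq0 //; apply: contraTneq isT => b0; move: be2; rewrite b0 expr0n /= => /eqP; rewrite eq_sym oner_eq0.
Qed.
End Eta.


Section Mat.
Variables (F : fieldType) (s l : nat) (al be : F).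
Hypothesis s_gt0 : (0 < s)%N.
Hypothesis l_gt0 : (0 < l)%N.
Local Notation E := (emb s l al be).
Local Notation Ms := (md s al).
Local Notation Ml := (md l be).
Implicit Types f g h u : {poly F}.
Implicit Types c d : 'M[F]_(s, l).

Lemma embE f g i j : E f g i j = (f %% Ms)`_i * (g %% Ml)`_j.
Proof. by rewrite mxE. Qed.

Lemma emb_eql f f' g : f %% Ms = f' %% Ms -> E f g = E f' g.
Proof. by move=> h; apply/matrixP => i j; rewrite !mxE h. Qed.

Lemma emb_eqr f g g' : g %% Ml = g' %% Ml -> E f g = E f g'.
Proof. by move=> h; apply/matrixP => i j; rewrite !mxE h. Qed.

Lemma mod_dvd (M a b : {poly F}) : M %| a - b -> a %% M = b %% M.
Proof.
move=> h; have -> : a = b + (a - b) by rewrite addrC subrK.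
by rewrite modpD (modp_eq0 h) addr0.
Qed.

Lemma emb_dvdl f f' g : Ms %| f - f' -> E f g = E f' g.
Proof. by move/mod_dvd/emb_eql. Qed.

Lemma emb_dvdr f g g' : Ml %| g - g' -> E f g = E f g'.
Proof. by move/mod_dvd/emb_eqr. Qed.

Lemma emb_modl f g : E (f %% Ms) g = E f g.
Proof. by apply: emb_eql; rewrite modp_id. Qed.

Lemma emb_modr f g : E f (g %% Ml) = E f g.
Proof. by apply: emb_eqr; rewrite modp_id. Qed.

Lemma emb_mulmodl f h g : E ((f %% Ms) * h) g = E (f * h) g.
Proof. by apply: emb_eql; rewrite mulrC modp_mul mulrC. Qed.

Lemma emb_mulmodl' f h g : E (h * (f %% Ms)) g = E (h * f) g.
Proof. by apply: emb_eql; rewrite modp_mul. Qed.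

Lemma emb_mulmodr f h g : E f ((g %% Ml) * h) = E f (g * h).
Proof. by apply: emb_eqr; rewrite mulrC modp_mul mulrC. Qed.

Lemma emb_mulmodr' f h g : E f (h * (g %% Ml)) = E f (h * g).
Proof. by apply: emb_eqr; rewrite modp_mul. Qed.

Lemma embDl f f' g : E (f + f') g = E f g + E f' g.
Proof. by apply/matrixP => i j; rewrite !mxE modpD coefD mulrDl. Qed.

Lemma embDr f g g' : E f (g + g') = E f g + E f g'.
Proof. by apply/matrixP => i j; rewrite !mxE modpD coefD mulrDr. Qed.

Lemma embZl k f g : E (k *: f) g = k *: E f g.
Proof. by apply/matrixP => i j; rewrite !mxE modpZl coefZ mulrA. Qed.

Lemma embZr k f g : E f (k *: g) = k *: E f g.
Proof. by apply/matrixP => i j; rewrite !mxE modpZl coefZ mulrCA. Qed.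

Lemma emb0l g : E 0 g = 0.
Proof. by apply/matrixP => i j; rewrite !mxE mod0p coef0 mul0r. Qed.

Lemma emb0r f : E f 0 = 0.
Proof. by apply/matrixP => i j; rewrite !mxE mod0p coef0 mulr0. Qed.

Lemma emb_suml (I : Type) (rr : seq I) (P : pred I) (G : I -> {poly F}) g :
  E (\sum_(i <- rr | P i) G i) g = \sum_(i <- rr | P i) E (G i) g.
Proof. exact: (big_morph (fun f => E f g) (fun f f' => embDl f f' g) (emb0l g)). Qed.

Lemma emb_sumr (I : Type) (rr : seq I) (P : pred I) (G : I -> {poly F}) f :
  E f (\sum_(i <- rr | P i) G i) = \sum_(i <- rr | P i) E f (G i).
Proof. exact: (big_morph (fun g => E f g) (fun g g' => embDr f g g') (emb0r f)). Qed.

Lemma px_coef c t (i : 'I_s) : (px c t)`_i = c i t.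
Proof.
rewrite /px coef_sum (bigD1 i) //= coefZ coefXn eqxx mulr1 big1 ?addr0 // => k ki.
rewrite coefZ coefXn.
have -> : (nat_of_ord i == k) = false by apply/negbTE; rewrite eq_sym; exact: ki.
by rewrite mulr0.
Qed.

Lemma size_px c t : (size (px c t) <= s)%N.
Proof.
apply/leq_sizeP => k sk; rewrite coef_sum; apply: big1 => i _.
rewrite coefZ coefXn.
have -> : (k == i) = false by apply/negbTE; have := ltn_ord i; lia.
by rewrite mulr0.
Qed.

Lemma px_emb f g t : px (E f g) t = (g %% Ml)`_t *: (f %% Ms).
Proof.
rewrite /px [in RHS](poly_exp (size_modM al s_gt0 f)) scaler_sumr.
by apply: eq_bigr => i _; rewrite embE scalerA mulrC.
Qed.

Lemma mulR_embl f g d : mulR al be (E f g) d = \sum_(t < l) E (f * px d t) (g * 'X^t).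
Proof.
rewrite /mulR exchange_big /=; apply: eq_bigr => t _.
transitivity (E (f * px d t) (\sum_(j1 < l) (g %% Ml)`_j1 *: 'X^(j1 + t))).
  rewrite emb_sumr; apply: eq_bigr => j1 _.
  by rewrite px_emb -scalerAl embZl embZr emb_mulmodl.
rewrite -emb_mulmodr [X in X * 'X^t](poly_exp (size_modM be l_gt0 g)) mulr_suml.
by congr E; apply: eq_bigr => j1 _; rewrite -scalerAl exprD.
Qed.

Lemma mulR_embr rr f g : mulR al be rr (E f g) = \sum_(t < l) E (px rr t * f) ('X^t * g).
Proof.
rewrite /mulR; apply: eq_bigr => t _.
transitivity (E (px rr t * f) (\sum_(j2 < l) (g %% Ml)`_j2 *: 'X^(t + j2))).
  rewrite emb_sumr; apply: eq_bigr => j2 _.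
  by rewrite px_emb -scalerAr embZl embZr emb_mulmodl'.
rewrite -emb_mulmodr' [X in 'X^t * X](poly_exp (size_modM be l_gt0 g)) mulr_sumr.
by congr E; apply: eq_bigr => j2 _; rewrite -scalerAr exprD.
Qed.

Lemma mulR_emb f g f' g' : mulR al be (E f g) (E f' g') = E (f * f') (g * g').
Proof.
rewrite mulR_embl.
transitivity (E (f * f') (\sum_(t < l) (g' %% Ml)`_t *: (g * 'X^t))).
  rewrite emb_sumr; apply: eq_bigr => t _.
  by rewrite px_emb -scalerAr embZl embZr emb_mulmodl'.
rewrite -emb_mulmodr' [X in g * X](poly_exp (size_modM be l_gt0 g')) mulr_sumr.
by congr E; apply: eq_bigr => t _; rewrite -scalerAr.
Qed.

Lemma dotR_emb c u h : dotR c (E u h) =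
  \sum_(i < s) (u %% Ms)`_i * \sum_(t < l) c i t * (h %% Ml)`_t.
Proof.
apply: eq_bigr => i _; rewrite mulr_sumr; apply: eq_bigr => t _.
by rewrite embE mulrCA mulrA.
Qed.

Lemma emb_dotR u h d : dotR (E u h) d =
  \sum_(i < s) (u %% Ms)`_i * \sum_(t < l) (h %% Ml)`_t * d i t.
Proof.
apply: eq_bigr => i _; rewrite mulr_sumr; apply: eq_bigr => t _.
by rewrite embE mulrA.
Qed.

Lemma dotRD c d1 d2 : dotR c (d1 + d2) = dotR c d1 + dotR c d2.
Proof.
rewrite /dotR -big_split; apply: eq_bigr => i _; rewrite -big_split.
by apply: eq_bigr => t _; rewrite mxE mulrDr.
Qed.

Lemma dotRZ c k d : dotR c (k *: d) = k * dotR c d.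
Proof.
rewrite /dotR mulr_sumr; apply: eq_bigr => i _; rewrite mulr_sumr.
by apply: eq_bigr => t _; rewrite mxE mulrCA.
Qed.

Lemma dotR0 c : dotR c 0 = 0.
Proof. by rewrite /dotR big1 // => i _; rewrite big1 // => t _; rewrite mxE mulr0. Qed.

Lemma dotR_sum c (I : Type) (rr : seq I) (P : pred I) (G : I -> 'M[F]_(s, l)) :
  dotR c (\sum_(i <- rr | P i) G i) = \sum_(i <- rr | P i) dotR c (G i).
Proof. exact: (big_morph (fun d => dotR c d) (dotRD c) (dotR0 c)). Qed.
End Mat.


Lemma flat_big (T : Type) (l : nat) (Xs : 'I_l -> seq T) :
  flatten [seq Xs j | j <- enum 'I_l] = \big[cat/[::]]_(j < l) Xs j.
Proof.
rewrite enumT /index_enum; unlock.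
elim: (Finite.enum _) => [|a rr IH]; first by rewrite big_nil.
by rewrite big_cons /= IH.
Qed.

Section Main.
Variables (F : finFieldType) (s l r : nat) (alpha beta w : F).
Variables (C : {set 'M[F]_(s, l)}) (p p' : 'I_l -> {poly F}).
Hypothesis s0 : (0 < s)%N.
Hypothesis l0 : (0 < l)%N.
Hypothesis al2 : alpha ^+ 2 = 1.
Hypothesis be2 : beta ^+ 2 = 1.
Hypothesis Hw : (r * l)%N.-primitive_root w.
Hypothesis Hwl : w ^+ l = beta.
Hypothesis HC : isIdealR alpha beta C.
Hypothesis HI : forall j (f : {poly F}),
      emb s l alpha beta f (etaL r w j) \in C <->
      exists g : {poly F}, md s alpha %| f - g * p j.
Hypothesis Hpp : forall j, p j * p' j = md s alpha.

Local Notation E := (emb s l alpha beta).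
Local Notation Ms := (md s alpha).
Local Notation Ml := (md l beta).
Local Notation eta j := (etaL r w j).
Local Notation etas j := (recip_n l.-1 (etaL r w j)).
Local Notation a j := (size (p j)).-1.
Local Notation rp j := (recip (p' j)).
Local Notation om := (om r w).
Local Notation kap := (kap r w).
Implicit Types (j k : 'I_l) (c d v : 'M[F]_(s, l)) (H u Fp : {poly F}).

Lemma dualP v : v \in dualR C <-> (forall c, c \in C -> dotR c v = 0).
Proof.
rewrite in_set; split.
  by move=> /forallP h c cC; have := h c; rewrite cC /= => /eqP.
by move=> h; apply/forallP => c; apply/implyP => cC; rewrite h.
Qed.

Lemma dual_sum (I : Type) (rr : seq I) (P : pred I) (G : I -> 'M[F]_(s, l)) :
  (forall i, P i -> G i \in dualR C) -> \sum_(i <- rr | P i) G i \in dualR C.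
Proof.
move=> h; apply/dualP => c cC; rewrite dotR_sum big1 // => i Pi.
exact: (dualP _).1 (h i Pi) c cC.
Qed.

Lemma dualZ (x : F) v : v \in dualR C -> x *: v \in dualR C.
Proof. by move=> /dualP h; apply/dualP => c cC; rewrite dotRZ h ?mulr0. Qed.

Lemma etas_mod j : etas j %% Ml = etas j.
Proof. by rewrite modp_small // size_XnsubC // ltnS (size_etas r w l0). Qed.

Lemma eta_mod j : eta j %% Ml = eta j.
Proof. by rewrite modp_small // size_XnsubC // ltnS (size_eta l0 Hw Hwl). Qed.

Lemma size_comb (k : 'I_l -> F) c : (size (\sum_(t < l) k t *: px c t)%R <= s)%N.
Proof.
apply/leq_sizeP => m sm; rewrite coef_sum big1 // => t _.
by rewrite coefZ nth_default ?mulr0 // (leq_trans (size_px s0 l0 c t)).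
Qed.

Lemma coef_comb (k : 'I_l -> F) c (i : 'I_s) :
  (\sum_(t < l) k t *: px c t)`_i = \sum_(t < l) k t * c i t.
Proof. by rewrite coef_sum; apply: eq_bigr => t _; rewrite coefZ px_coef. Qed.

Lemma K1 c j : c \in C -> E (\sum_(t < l) (om j ^+ t) *: px c t) (eta j) \in C.
Proof.
case: HC => _ _ HCM cC; have := HCM (E 1 (eta j)) c cC.
rewrite mulR_embl // emb_suml.
congr (_ \in C); apply: eq_bigr => t _.
rewrite mul1r mulrC (emb_dvdr _ _ _ (eta_shift l0 Hw Hwl j t)) mul_polyC embZr embZl //.
Qed.

Lemma K2 j H : (size H <= a j)%N -> E (H * rp j) (etas j) \in dualR C.
Proof.
move=> hH; apply/dualP => c cC.
have [g0 hg] := (HI j _).1 (K1 j cC).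
rewrite dotR_emb etas_mod.
have szu := size_Hrp s0 (Hpp j) hH.
rewrite modp_small ?size_XnsubC //.
move: hg; set fc := \sum_(t < l) _ => hg.
have hfc : fc %% Ms = (g0 * p j) %% Ms by apply: mod_dvd.
transitivity (kap j * \sum_(i < s) ((g0 * p j) %% Ms)`_i * (H * rp j)`_i); last first.
  by rewrite (orth1 s0 _ (Hpp j) hH) mulr0.
rewrite mulr_sumr; apply: eq_bigr => i _.
rewrite -hfc modp_small; last by rewrite size_XnsubC // ltnS size_comb.
rewrite /fc coef_comb [in RHS]mulrA [in RHS]mulr_sumr [in RHS]mulrC; congr (_ * _).
apply: eq_bigr => t _; rewrite (etas_coef l0 Hw Hwl) //; ring.
Qed.

Lemma lag_coef (t t' : 'I_l) : \sum_(j < l) (eta j)`_t * om j ^+ t' = (t == t')%:R.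
Proof.
have := congr1 (fun q : {poly F} => q`_t) (lagrange_eta l0 Hw Hwl (ltn_ord t')).
rewrite /= coef_sum coefXn => <-; apply: eq_bigr => j _; rewrite coefZ mulrC //.
Qed.

Lemma K3 d : d \in dualR C -> exists Hs : 'I_l -> {poly F},
  (forall j, size (Hs j) <= a j)%N /\ d = \sum_(j < l) E (Hs j * rp j) (etas j).
Proof.
move=> dd.
pose u j := (kap j)^-1 *: \sum_(t < l) (eta j)`_t *: px d t.
have szu j : (size (u j) <= s)%N by apply: leq_trans (size_scale_leq _ _) (size_comb _ _).
have coefu j (i : 'I_s) : (u j)`_i = (kap j)^-1 * \sum_(t < l) (eta j)`_t * d i t.
  by rewrite coefZ coef_comb.
have ortho j g0 : \sum_(i < s) ((g0 * p j) %% Ms)`_i * (u j)`_i = 0.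
  have cC : E (g0 * p j) (eta j) \in C by apply/(HI j _).2; exists g0; rewrite subrr dvdp0.
  have := (dualP d).1 dd _ cC; rewrite emb_dotR eta_mod => h.
  transitivity ((kap j)^-1 * \sum_(i < s) ((g0 * p j) %% Ms)`_i * \sum_(t < l) (eta j)`_t * d i t).
    by rewrite mulr_sumr; apply: eq_bigr => i _; rewrite coefu mulrCA.
  by rewrite h mulr0.
have [Hs hHs] := fin_all_exists (fun j => dual1 s0 (Hpp j) (szu j) (ortho j)).
exists Hs; split; first by move=> j; case: (hHs j).
have -> : \sum_(j < l) E (Hs j * rp j) (etas j) = \sum_(j < l) E (u j) (etas j).
  by apply: eq_bigr => j _; case: (hHs j) => _ <-.
apply/matrixP => i t'; rewrite summxE; symmetry.
transitivity (\sum_(j < l) \sum_(t < l) d i t * ((eta j)`_t * om j ^+ t')); last first.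
  rewrite exchange_big /=; under eq_bigr do rewrite -mulr_sumr lag_coef.
  rewrite (bigD1 t') //= eqxx mulr1 big1 ?addr0 // => t tt'.
  by rewrite (negPf tt') mulr0.
apply: eq_bigr => j _; rewrite embE etas_mod modp_small; last by rewrite size_XnsubC // ltnS.
rewrite coefu (etas_coef l0 Hw Hwl) // mulr_sumr mulr_suml.
apply: eq_bigr => t _.
have := kap_neq0 l0 Hw j; set kk := kap j => k0.
by field.
Qed.

Lemma K4 Fp j : exists H, (size H <= a j)%N /\
  E (Fp * rp j) (etas j) = E (H * rp j) (etas j).
Proof.
have [H [hH hm]] := red1 s0 al2 Fp (Hpp j).
by exists H; split => //; rewrite -emb_modl hm.
Qed.

Lemma K5 rr j : mulR alpha beta rr (E (rp j) (etas j)) \in dualR C.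
Proof.
rewrite mulR_embr //.
have -> : \sum_(t < l) E (px rr t * rp j) ('X^t * etas j) =
    E ((\sum_(t < l) ((om j)^-1 ^+ t) *: px rr t) * rp j) (etas j).
  rewrite mulr_suml emb_suml; apply: eq_bigr => t _.
  rewrite (emb_dvdr _ _ _ (etas_shift l0 Hw Hwl be2 j t)) mul_polyC embZr -embZl.
  by rewrite scalerAl.
have [H [hH ->]] := K4 (\sum_(t < l) ((om j)^-1 ^+ t) *: px rr t) j.
exact: K2.
Qed.

Lemma phiE (i0 : 'I_s) k j u :
  dotR (E 'X^i0 (eta k)) (E u (etas j)) = (k == j)%:R * kap j * (u %% Ms)`_i0.
Proof.
rewrite emb_dotR eta_mod.
rewrite (bigD1 i0) //= [X in _ + X]big1 ?addr0; last first.
  move=> i ii0; rewrite modp_small; last by rewrite size_polyXn size_XnsubC // ltnS.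
  rewrite coefXn.
  have -> : (nat_of_ord i == i0) = false by apply/negbTE.
  by rewrite mul0r.
rewrite modp_small; last by rewrite size_polyXn size_XnsubC // ltnS.
rewrite coefXn eqxx mul1r.
under eq_bigr do rewrite embE etas_mod (etas_coef l0 Hw Hwl) // mulrCA.
rewrite -mulr_sumr mulrC; congr (_ * _).
rewrite -(eta_horner l0 Hw k j) (horner_coef_wide _ (size_eta l0 Hw Hwl k)).
rewrite mulr_suml; apply: eq_bigr => t _; ring.
Qed.

Definition Xs j := [seq E ('X^i * rp j) (etas j) | i <- iota 0 (a j)].

Lemma size_Xs j : size (Xs j) = a j.
Proof. by rewrite size_map size_iota. Qed.

Lemma Xs_sum j (kk : 'I_(size (Xs j)) -> F) :
  \sum_(i < size (Xs j)) kk i *: (Xs j)`_i =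
  E ((\sum_(i < size (Xs j)) kk i *: 'X^i) * rp j) (etas j).
Proof.
rewrite mulr_suml emb_suml; apply: eq_bigr => i _.
rewrite (nth_map 0%N); last by rewrite size_iota -size_Xs.
by rewrite nth_iota ?add0n -?size_Xs // -embZl scalerAl.
Qed.

Lemma size_Xs_comb j (kk : 'I_(size (Xs j)) -> F) :
  (size (\sum_(i < size (Xs j)) kk i *: 'X^i)%R <= a j)%N.
Proof.
apply/leq_sizeP => m hm; rewrite coef_sum big1 // => i _.
rewrite coefZ coefXn.
have -> : (m == i) = false by apply/negbTE; have h1 := ltn_ord i; have h2 := size_Xs j; move: h1 h2 hm; set z := size (Xs j); set y := a j; lia.
by rewrite mulr0.
Qed.

Lemma span_Xs j v : v \in <<Xs j>>%VS -> exists H, (size H <= a j)%N /\ v = E (H * rp j) (etas j).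
Proof.
move=> hv; pose kk i := coord (in_tuple (Xs j)) i v.
have -> : v = \sum_(i < size (Xs j)) kk i *: (Xs j)`_i by exact: (coord_span (X := in_tuple (Xs j)) hv).
exists (\sum_(i < size (Xs j)) kk i *: 'X^i); split; first exact: size_Xs_comb.
exact: Xs_sum.
Qed.

Lemma modzero u : (forall i0 : 'I_s, (u %% Ms)`_i0 = 0) -> u %% Ms = 0.
Proof.
move=> h; apply/polyP => n; rewrite coef0.
case: (ltnP n s) => hn; first exact: (h (Ordinal hn)).
by rewrite nth_default // (leq_trans (size_modM _ s0 _)).
Qed.

Lemma phi_span k j v : k != j -> v \in <<Xs j>>%VS -> forall i0 : 'I_s,
  dotR (E 'X^i0 (eta k)) v = 0.
Proof.
move=> kj /span_Xs [H [_ ->]] i0.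
by rewrite phiE (negPf kj) !mul0r.
Qed.

Lemma free_Xs j : free (Xs j).
Proof.
suff : free (in_tuple (Xs j)) by [].
apply/freeP => kk /=; rewrite Xs_sum => h.
set Hk := \sum_(i < _) _ in h.
have hH := size_Xs_comb kk; rewrite -/Hk in hH.
have m0 : (Hk * rp j) %% Ms = 0.
  apply: modzero => i0.
  have := phiE i0 j j (Hk * rp j); rewrite h dotR0 eqxx mul1r.
  move/eqP; rewrite eq_sym mulf_eq0 (negPf (kap_neq0 l0 Hw j)) /= => /eqP //.
have /eqP : Hk * rp j = 0 by rewrite -(modp_small (p := Hk * rp j) (q := Ms)) // size_XnsubC // ltnS (size_Hrp s0 (Hpp j) hH).
rewrite mulf_eq0 (negPf (recip_neq0 s0 al2 (Hpp j))) orbF => /eqP H0 i.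
have := congr1 (fun q : {poly F} => q`_i) H0; rewrite /Hk coef_sum coef0 => <-.
rewrite (bigD1 i) //= coefZ coefXn eqxx mulr1 big1 ?addr0 // => m mi.
rewrite coefZ coefXn.
have -> : (nat_of_ord i == m) = false by apply/negbTE; rewrite eq_sym.
by rewrite mulr0.
Qed.

Lemma direct_Xs : directv (\sum_(j < l) <<Xs j>>).
Proof.
apply/directv_sum_independent => us hus hsum k _.
have [H [hH hk]] := span_Xs (hus k isT).
rewrite hk -emb_modl; suff -> : (H * rp k) %% Ms = 0 by rewrite emb0l.
apply: modzero => i0.
have := congr1 (fun v => dotR (E 'X^i0 (eta k)) v) hsum.
rewrite /= dotR_sum (bigD1 k) //= big1 ?addr0; last first.
  by move=> j kj; apply: phi_span; [rewrite eq_sym | exact: hus].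
rewrite hk phiE eqxx mul1r dotR0 => /eqP.
by rewrite mulf_eq0 (negPf (kap_neq0 l0 Hw k)) /= => /eqP.
Qed.


Lemma freeB : free (flatten [seq [seq E ('X^i * recip (p' j)) (recip_n l.-1 (etaL r w j))
                         | i <- iota 0 (size (p j)).-1] | j <- enum 'I_l]).
Proof.
rewrite (flat_big Xs); apply: bigcat_free => [|j _]; [exact: direct_Xs | exact: free_Xs].
Qed.

Lemma part2 v : v \in dualR C <-> v \in <<flatten [seq [seq E ('X^i * recip (p' j)) (recip_n l.-1 (etaL r w j))
                         | i <- iota 0 (size (p j)).-1] | j <- enum 'I_l]>>%VS.
Proof.
set BB := flatten _; split.
  move=> /K3 [Hs [hs ->]]; apply: memv_suml => j _.
  rewrite (poly_exp (hs j)) mulr_suml emb_suml; apply: memv_suml => i _.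
  rewrite -scalerAl embZl; apply: memvZ; apply: memv_span.
  apply/flatten_mapP; exists j; first by rewrite mem_enum.
  by apply/mapP; exists (nat_of_ord i); rewrite // mem_iota add0n ltn_ord.
move=> hv; rewrite (coord_span (X := in_tuple BB) hv); apply: dual_sum => i _; apply: dualZ.
have : BB`_i \in BB by apply: mem_nth.
move=> /flatten_mapP [j _ /mapP [m hm ->]]; apply: K2.
by rewrite size_polyXn; move: hm; rewrite mem_iota add0n => /andP [_].
Qed.

Lemma part1 v : v \in dualR C <-> exists rr : 'I_l -> 'M[F]_(s, l),
  v = \sum_(j < l) mulR alpha beta (rr j) (E (recip (p' j)) (recip_n l.-1 (etaL r w j))).
Proof.
split.
  move=> /K3 [Hs [hs ->]]; exists (fun j => E (Hs j) 1).
  by apply: eq_bigr => j _; rewrite mulR_emb // mul1r.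
by move=> [rr ->]; apply: dual_sum => j _; exact: K5.
Qed.
End Main.

Unset Implicit Arguments.
Theorem theorem3 (F : finFieldType) (s l r : nat) (alpha beta w : F)
  (C : {set 'M[F]_(s, l)}) (p p' : 'I_l -> {poly F}) :
  (0 < s)%N -> (0 < l)%N ->
  (alpha = 1 \/ alpha = -1) -> (beta = 1 \/ beta = -1) ->
  r.-primitive_root beta ->
  (#|F| = 1 %[mod r * l])%N ->
  (r * l)%N.-primitive_root w -> w ^+ l = beta ->
  isIdealR alpha beta C ->
  (forall j, p j \is monic) ->
  (forall j, p j %| md s alpha) ->
  (forall j (f : {poly F}),
      emb s l alpha beta f (etaL r w j) \in C <->
      exists g : {poly F}, md s alpha %| f - g * p j) ->
  (forall j, p j * p' j = md s alpha) ->
  let g j := emb s l alpha beta (recip (p' j)) (recip_n l.-1 (etaL r w j)) in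
  let B := flatten [seq [seq emb s l alpha beta ('X^i * recip (p' j))
                                   (recip_n l.-1 (etaL r w j))
                         | i <- iota 0 (size (p j)).-1] | j <- enum 'I_l] in
  (forall v, v \in dualR C <->
     exists rr : 'I_l -> 'M[F]_(s, l), v = \sum_(j < l) mulR alpha beta (rr j) (g j))
  /\ (free B /\ forall v, v \in dualR C <-> v \in <<B>>%VS).
Proof.
move=> s0 l0 Ha Hb Hr Hq Hw Hwl HC Hmon Hdiv HI Hpp g B.
have al2 : alpha ^+ 2 = 1 by case: Ha => ->; rewrite ?sqrrN expr1n.
have be2 : beta ^+ 2 = 1 by case: Hb => ->; rewrite ?sqrrN expr1n.
split; first by move=> v; exact: (part1 s0 l0 al2 be2 Hw Hwl HC HI Hpp).
split; first exact: (freeB s0 l0 al2 Hw Hwl Hpp).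
by move=> v; exact: (part2 s0 l0 Hw Hwl HC HI Hpp).
Qed.
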